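(* Let $A=\{h\in\mathfrak{S}Sym:(\mathrm{id}\otimes\mathcal{D})\Delta(h)=h\otimes1\}$ be the left Hopf kernel of $\mathcal{D}\colon\mathfrak{S}Sym\to QSym$, and $A_n$ its homogeneous component of degree $n\ge1$. Then a basis of $A_n$ is $\{\mathcal{M}_u\}$ where $u$ runs over those $u\in\mathfrak{S}_n$ for which there is no $k\in\{0,1,\ldots,n-1\}$ with $u_{k+i}=i$ for all $1\le i\le n-k$. In particular $\dim A_n=n!-\sum_{k=0}^{n-1}k!$.
   Context: $\mathfrak{S}Sym$ is the Malvenuto–Reutenauer Hopf algebra over $\mathbb{Q}$ with basis $\{\mathcal{F}_u:u\in\mathfrak{S}_n,n\ge0\}$, graded by $n$; product $\mathcal{F}_u\cdot\mathcal{F}_v=\sum_\zeta\mathcal{F}_{(u\times v)\zeta^{-1}}$ over $\zeta\in\mathfrak{S}_{p+q}$ increasing on $[1,p]$ and on $[p+1,p+q]$ (where $(u\times v)(i)=u_i$, $i\le p$, $(u\times v)(p+j)=p+v_j$, and permutation product is composition); coproduct $\Delta(\mathcal{F}_u)=\sum_{p=0}^n\mathcal{F}_{\mathrm{st}(u_1..u_p)}\otimes\mathcal{F}_{\mathrm{st}(u_{p+1}..u_n)}$ with $\mathrm{st}$ the permutation with the same relative order. Weak order $u\le v$ iff $\mathrm{Inv}(u)\subseteq\mathrm{Inv}(v)$, Möbius function $\mu$, $\mathcal{M}_u=\sum_{v\ge u}\mu(u,v)\mathcal{F}_v$. $QSym$ is the Hopf algebra of quasi-symmetric functions with fundamental basis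 $F_J$ ($J\subseteq[n-1]$), and $\mathcal{D}(\mathcal{F}_u)=F_{\mathrm{Des}(u)}$, $\mathrm{Des}(u)=\{p:u_p>u_{p+1}\}$, is a Hopf algebra morphism. *)

(* Defs.v *)
(* The degree-n component SSym_n of the Malvenuto--Reutenauer
   algebra over Q is represented by coordinate vectors in the fundamental basis:
   h = \sum_u h u F_u, with h : {ffun 'S_n -> rat}. *)
From mathcomp Require Import all_boot all_order all_algebra all_fingroup.
Set Implicit Arguments. Unset Strict Implicit. Unset Printing Implicit Defensive.
Import GRing.Theory.

(* one-line notation u_1 ... u_n, with 0-based letters: u_(i+1) = (u i) + 1 *)
Definition word n (u : 'S_n) : seq nat := [seq val (u i) | i <- enum 'I_n].

Definition st_rel (s : seq nat) m (v : 'S_m) : bool :=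
  [forall i : 'I_m, forall j : 'I_m, (v i < v j)%N == (nth 0 s i < nth 0 s j)%N].

(* standardization st(s) in S_m (unique when s has m distinct letters) *)
Definition st (s : seq nat) m : 'S_m := odflt (1%g : 'S_m) [pick v : 'S_m | st_rel s v].

(* descent set Des(w) ⊆ [m-1], 1-based positions, as an increasing list *)
Definition Des m (w : 'S_m) : seq nat :=
  [seq p <- iota 1 m.-1 | (nth 0 (word w) p.-1 > nth 0 (word w) p)%N].

(* Coefficient of F_v ⊗ F_J (v in S_p, F_J in QSym_(n-p)) in (id ⊗ D) Δ(h),
   for h in SSym_n. *)
Definition idDDelta n (h : {ffun 'S_n -> rat}) p (v : 'S_p) (J : seq nat) : rat :=
  \sum_(u : 'S_n) h u *
     ((st (take p (word u)) p == v) && (Des (st (drop p (word u)) (n - p)) == J))%:R.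

(* h ∈ A_n  :<=>  (id ⊗ D) Δ(h) = h ⊗ 1   (1 = F_∅ in QSym_0);
   compared coefficientwise on the basis F_v ⊗ F_J of ⊕_p SSym_p ⊗ QSym_(n-p). *)
Definition in_left_kernel n (h : {ffun 'S_n -> rat}) : Prop :=
  (forall p (v : 'S_p) (J : seq nat), (p < n)%N -> idDDelta h v J = 0%R) /\
  (forall (v : 'S_n) (J : seq nat), idDDelta h v J = ((J == [::])%:R * h v)%R).

Definition inv_pair n (u : 'S_n) (i j : 'I_n) : bool := (i < j)%N && (u j < u i)%N.
Definition weak_le n (u v : 'S_n) : bool :=
  [forall i : 'I_n, forall j : 'I_n, inv_pair u i j ==> inv_pair v i j].
Definition weak_lt n (u v : 'S_n) : bool := weak_le u v && (u != v).

(* The fuel #|S_n| exceeds the length of every chain, so it is never exhausted. *)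
Fixpoint mu_fuel n (k : nat) (u v : 'S_n) : rat :=
  match k with
  | 0 => (u == v)%:R
  | k.+1 => if u == v then 1%R
            else if weak_le u v then
              (- \sum_(w : 'S_n | weak_le u w && weak_lt w v) mu_fuel k u w)%R
            else 0%R
  end.
Definition mobius n (u v : 'S_n) : rat := mu_fuel #|{perm 'I_n}| u v.

Definition Mbasis n (u : 'S_n) : {ffun 'S_n -> rat} :=
  [ffun v => if weak_le u v then mobius u v else 0%R].

(* u is "good" iff there is no k in {0,...,n-1} with u_(k+i) = i for 1 <= i <= n-k
   (0-based: u (k+j) = j for 0 <= j < n-k) *)
Definition good n (u : 'S_n) : bool :=
  ~~ [exists k : 'I_n, [forall j : 'I_n, ((k + j < n)%N ==> (nth 0 (word u) (k + j) == j))]].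

(* Main.v *)
Require Import Defs.
From mathcomp Require Import all_boot all_order all_algebra all_fingroup.
Import GRing.Theory.
Set Implicit Arguments. Unset Strict Implicit. Unset Printing Implicit Defensive.


Definition X m (x : 'S_m) (i : nat) : nat := nth 0 (word x) i.

Lemma size_word m (x : 'S_m) : size (word x) = m.
Proof. by rewrite /word size_map size_enum_ord. Qed.

Lemma nth_word m (x : 'S_m) (i : 'I_m) : X x i = x i.
Proof.
rewrite /X /word (nth_map i) ?size_enum_ord //.
by rewrite nth_ord_enum.
Qed.

Lemma X_lt m (x : 'S_m) i : i < m -> X x i < m.
Proof. by move=> lt; rewrite -[i]/(val (Ordinal lt)) nth_word. Qed.

Lemma X_inj m (x : 'S_m) i j : i < m -> j < m -> X x i = X x j -> i = j.
Proof.
move=> li lj; rewrite -[i]/(val (Ordinal li)) -[j]/(val (Ordinal lj)) !nth_word.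
by move/val_inj/perm_inj => [].
Qed.

Lemma uniq_word m (x : 'S_m) : uniq (word x).
Proof.
rewrite /word map_inj_uniq ?enum_uniq //.
by move=> i j /val_inj/perm_inj.
Qed.

Lemma card_ltc m (c : nat) : c <= m -> #|[set k : 'I_m | k < c]| = c.
Proof.
move=> cm.
have -> : [set k : 'I_m | k < c] = [set widen_ord cm k | k : 'I_c].
  apply/setP => k; rewrite inE; apply/idP/imsetP.
    by move=> kc; exists (Ordinal kc) => //; apply: val_inj.
  by case=> k' _ ->; rewrite /= ltn_ord.
rewrite card_imset ?card_ord //.
by move=> a b /(congr1 val) /= /val_inj.
Qed.

Lemma card_lt_perm m (u : 'S_m) (i : 'I_m) : #|[set j | u j < u i]| = u i.
Proof.
rewrite -(card_imset _ (@perm_inj _ u)).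
have -> : u @: [set j | u j < u i] = [set k : 'I_m | k < u i].
  apply/setP => k; rewrite inE; apply/imsetP/idP.
    by case=> j; rewrite inE => lt ->.
  by move=> lt; exists (u^-1 k)%g; rewrite ?inE permKV.
by rewrite card_ltc // ltnW.
Qed.

Lemma perm_rel_uniq m (u v : 'S_m) :
  (forall i j, (u i < u j) = (v i < v j)) -> u = v.
Proof.
move=> H; apply/permP => i; apply: val_inj => /=.
rewrite -(card_lt_perm u) -(card_lt_perm v).
by apply: eq_card => j; rewrite !inE H.
Qed.

Lemma st_exists (s : seq nat) m : uniq s -> size s = m -> exists v : 'S_m, st_rel s v.
Proof.
move=> us ss.
pose c (i : 'I_m) := #|[set j : 'I_m | nth 0 s j < nth 0 s i]|.
have cm i : c i < m.
  rewrite /c; apply: (@leq_trans #|[set: 'I_m]|); last by rewrite cardsT card_ord.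
  apply: proper_card.
  rewrite properT; apply/negP => /eqP E.
  by move: (in_setT i); rewrite -E inE ltnn.
have mono (i j : 'I_m) : nth 0 s i < nth 0 s j -> c i < c j.
  move=> lt; apply: proper_card; apply/properP; split.
    apply/subsetP => k; rewrite !inE => lk; exact: ltn_trans lk lt.
  by exists i; rewrite !inE ?lt ?ltnn.
have neq (i j : 'I_m) : i != j -> nth 0 s i != nth 0 s j.
  move=> ne; apply/negP => /eqP E; move/eqP: ne; apply; apply: val_inj.
  by apply/eqP; rewrite -(nth_uniq 0 _ _ us) ?ss ?ltn_ord // E.
have rel (i j : 'I_m) : (c i < c j) = (nth 0 s i < nth 0 s j).
  case: (ltngtP (nth 0 s i) (nth 0 s j)) => [lt|gt|E].
  - exact: mono.
  - by apply/negbTE; rewrite -leqNgt ltnW // mono.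
  - have -> : i = j by apply/eqP; apply/negPn/negP => /neq; rewrite E eqxx.
    by rewrite ltnn.
pose f i := Ordinal (cm i).
have finj : injective f.
  move=> i j /(congr1 val) /= E; apply/eqP; apply/negPn/negP => /neq.
  by case: (ltngtP (nth 0 s i) (nth 0 s j)) => // [/mono|/mono]; rewrite E ltnn.
exists (perm finj); apply/forallP => i; apply/forallP => j.
by rewrite !permE /= rel.
Qed.

Lemma st_relE (s : seq nat) m (v : 'S_m) :
  st_rel s v = [forall i : 'I_m, forall j : 'I_m, (v i < v j) == (nth 0 s i < nth 0 s j)].
Proof. by []. Qed.

Lemma st_rel_uniq (s : seq nat) m (v w : 'S_m) : st_rel s v -> st_rel s w -> v = w.
Proof.
move=> /forallP Hv /forallP Hw; apply: perm_rel_uniq => i j.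
by move/forallP: (Hv i) => /(_ j) /eqP ->; move/forallP: (Hw i) => /(_ j) /eqP ->.
Qed.

Lemma st_spec (s : seq nat) m : uniq s -> size s = m -> st_rel s (st s m).
Proof.
move=> us ss; rewrite /st; case: pickP => [v //|H].
by case: (st_exists us ss) => v; rewrite H.
Qed.

Lemma st_eq (s : seq nat) m (v : 'S_m) : uniq s -> size s = m -> st_rel s v -> st s m = v.
Proof. by move=> us ss; apply: st_rel_uniq; apply: st_spec. Qed.

Lemma st_lt (s : seq nat) m (i j : 'I_m) : uniq s -> size s = m ->
  (st s m i < st s m j) = (nth 0 s i < nth 0 s j).
Proof.
move=> us ss; move/forallP: (st_spec us ss) => /(_ i) /forallP /(_ j) /eqP //.
Qed.


Section Weak.
Variable m : nat.
Implicit Types u v w : 'S_m.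

Lemma weak_le_refl u : weak_le u u.
Proof. by apply/forallP => i; apply/forallP => j; rewrite implybb. Qed.

Lemma weak_le_trans u v w : weak_le u v -> weak_le v w -> weak_le u w.
Proof.
move=> /forallP H1 /forallP H2; apply/forallP => i; apply/forallP => j.
apply/implyP => /(implyP (forallP (H1 i) j)); exact: (implyP (forallP (H2 i) j)).
Qed.

Lemma lt_distinct u (i j : 'I_m) : i != j -> (u i < u j) = ~~ (u j < u i).
Proof.
move=> ne; rewrite -leqNgt ltn_neqAle.
have -> : (val (u i) != val (u j)) = true.
  by apply/negP => /eqP/val_inj/perm_inj E; rewrite E eqxx in ne.
by [].
Qed.

Lemma weak_le_anti u v : weak_le u v -> weak_le v u -> u = v.
Proof.
move=> /forallP H1 /forallP H2; apply: perm_rel_uniq => i j.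
have E (a b : 'I_m) : a < b -> (u b < u a) = (v b < v a).
  move=> ab; move: (forallP (H1 a) b) (forallP (H2 a) b); rewrite /Defs.inv_pair ab /=.
  by case: (u b < u a); case: (v b < v a).
case: (ltngtP (val i) (val j)) => [ij|ji|ij].
- have ne : i != j by rewrite -val_eqE /= neq_ltn ij.
  by rewrite !(lt_distinct _ ne) E.
- exact: E.
- by rewrite (val_inj ij) !ltnn.
Qed.

Definition hgt v := #|[set w | weak_lt w v]|.

Lemma lt_hgt w v : weak_lt w v -> hgt w < hgt v.
Proof.
move=> /andP [le ne]; apply: proper_card; apply/properP; split.
  apply/subsetP => x; rewrite !inE /weak_lt => /andP [lx nx]; rewrite (weak_le_trans lx le) /=.
  apply/negP => /eqP E; subst x; move/negP: nx; apply; apply/eqP.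
  exact: weak_le_anti.
by exists w; rewrite !inE /weak_lt ?le ?ne ?eqxx ?andbF.
Qed.

Lemma hgt_lt v : hgt v < #|{perm 'I_m}|.
Proof.
rewrite /hgt -cardsT; apply: proper_card; rewrite properT; apply/negP => /eqP E.
by move: (in_setT v); rewrite -E inE /weak_lt eqxx andbF.
Qed.

Lemma weak_ind (P : 'S_m -> Prop) :
  (forall v, (forall w, weak_lt w v -> P w) -> P v) -> forall v, P v.
Proof.
move=> IH v; move: {2}(hgt v) (leqnn (hgt v)) => k; elim: k v => [|k IHk] v hv.
  apply: IH => w /lt_hgt; by rewrite leqn0 in hv; rewrite (eqP hv).
apply: IH => w /lt_hgt lt; apply: IHk; by rewrite -ltnS (leq_trans lt).
Qed.

Lemma mu_stab k k' u v : hgt v < k -> hgt v < k' -> mu_fuel k u v = mu_fuel k' u v.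
Proof.
elim: k k' v => [//|k IH] [//|k'] v hk hk' /=.
case: (u == v) => //; case: (weak_le u v) => //; congr (- _)%R.
apply: eq_bigr => w /andP [_ lt]; apply: IH; apply: leq_trans (lt_hgt lt) _; by rewrite -ltnS.
Qed.

Lemma mobius_id u : mobius u u = 1%R.
Proof.
rewrite /mobius; have := hgt_lt u; case: #|_| => // k _ /=; by rewrite eqxx.
Qed.

Lemma mobius_rec u v : u != v -> weak_le u v ->
  mobius u v = (- \sum_(w | weak_le u w && weak_lt w v) mobius u w)%R.
Proof.
move=> ne le; rewrite {1}/mobius; have := hgt_lt v.
case E: #|_| => [//|k] hk /=; rewrite (negbTE ne) le; congr (- _)%R.
apply: eq_bigr => w /andP [_ lt]; rewrite /mobius; apply: mu_stab.
  by apply: leq_trans (lt_hgt lt) _.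
exact: hgt_lt.
Qed.

Lemma mobius_sum u v : weak_le u v ->
  (\sum_(w | weak_le u w && weak_le w v) mobius u w = (u == v)%:R)%R.
Proof.
move=> le; case: (eqVneq u v) => [<-|ne].
  rewrite (bigD1 u) ?weak_le_refl //= mobius_id big1 ?addr0 //.
  by move=> w /andP [/andP [a b] c]; move: c; rewrite (weak_le_anti b a) eqxx.
rewrite (bigD1 v) ?le ?weak_le_refl //= (mobius_rec ne le).
rewrite [X in (_ + X)%R](eq_bigl (fun w => weak_le u w && weak_lt w v)).
  by rewrite addNr.
by move=> w; rewrite /weak_lt andbA.
Qed.

Definition gsum (h : 'S_m -> rat) (W : 'S_m) : rat := (\sum_(x | weak_le x W) h x)%R.

Lemma gsum_M u W : gsum (Mbasis u) W = ((u == W)%:R)%R.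
Proof.
rewrite /gsum (eq_bigr (fun x => if weak_le u x then mobius u x else 0%R)); last first.
  by move=> x _; rewrite ffunE.
rewrite -big_mkcondr /=.
case le: (weak_le u W).
  rewrite -(mobius_sum le); apply: eq_bigl => x; by rewrite andbC.
rewrite big1 //; last first.
  by move=> x /andP [a b]; move: le; rewrite (weak_le_trans b a).
case: eqP => // E; by move: le; rewrite E weak_le_refl.
Qed.

Lemma gsum_inj (h : 'S_m -> rat) : (forall W, gsum h W = 0%R) -> forall v, h v = 0%R.
Proof.
move=> H; apply: weak_ind => v IH.
move: (H v); rewrite /gsum (bigD1 v) ?weak_le_refl //= big1 ?addr0 //.
Qed.

End Weak.


Lemma X_neq m (x : 'S_m) i j : i < m -> j < m -> i != j -> X x i != X x j.
Proof. by move=> li lj ne; apply/negP => /eqP /(X_inj li lj) E; rewrite E eqxx in ne. Qed.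

Lemma X_ltN m (x : 'S_m) i j : i < m -> j < m -> i != j ->
  (X x i < X x j) = ~~ (X x j < X x i).
Proof.
move=> li lj ne; rewrite -leqNgt ltn_neqAle (X_neq x li lj ne) //.
Qed.

Lemma weak_leP m (u v : 'S_m) :
  reflect (forall i j, i < j -> j < m -> X u j < X u i -> X v j < X v i) (weak_le u v).
Proof.
apply: (iffP forallP) => [H i j ij jm|H i].
  have im : i < m by apply: ltn_trans ij jm.
  move: (forallP (H (Ordinal im)) (Ordinal jm)).
  rewrite /Defs.inv_pair /= ij /= -(nth_word u (Ordinal jm)) -(nth_word u (Ordinal im)).
  by rewrite -(nth_word v (Ordinal jm)) -(nth_word v (Ordinal im)) => /implyP.
apply/forallP => j; rewrite /Defs.inv_pair; apply/implyP => /andP [ij lt].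
rewrite ij /=; rewrite -!(nth_word u) in lt; rewrite -!(nth_word v).
exact: H ij (ltn_ord j) lt.
Qed.

Section Pre.
Variables (n : nat) (x : 'S_n).

Definition pre p := st (take p (word x)) p.
Definition suf p := st (drop p (word x)) (n - p).

Lemma pre_lt p (i j : 'I_p) : p <= n -> (pre p i < pre p j) = (X x i < X x j).
Proof.
move=> pn; rewrite /pre st_lt ?take_uniq ?uniq_word // ?size_take ?size_word.
  by rewrite !nth_take.
by case: ltnP => // le; apply/eqP; rewrite eqn_leq pn le.
Qed.

Lemma pre_X p i j : p <= n -> i < p -> j < p -> (X (pre p) i < X (pre p) j) = (X x i < X x j).
Proof.
move=> pn ip jp; rewrite -[i]/(val (Ordinal ip)) -[j]/(val (Ordinal jp)) !nth_word.
exact: pre_lt.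
Qed.

Lemma pre_eq p (v : 'S_p) : p <= n ->
  (forall i j, i < p -> j < p -> (X v i < X v j) = (X x i < X x j)) -> pre p = v.
Proof.
move=> pn H; apply: perm_rel_uniq => i j; rewrite pre_lt // -!nth_word H //.
Qed.

Lemma pre_eqE p (v : 'S_p) : p <= n ->
  (pre p == v) = [forall i : 'I_p, forall j : 'I_p, (X v i < X v j) == (X x i < X x j)].
Proof.
move=> pn; apply/eqP/forallP => [<- i|H]; first by apply/forallP => j; rewrite !pre_X.
apply: pre_eq => // i j ip jp.
by move/forallP: (H (Ordinal ip)) => /(_ (Ordinal jp)) /eqP.
Qed.

Lemma suf_lt p (i j : 'I_(n - p)) : (suf p i < suf p j) = (X x (p + i) < X x (p + j)).
Proof.
rewrite /suf st_lt ?drop_uniq ?uniq_word // ?size_drop ?size_word //.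
by rewrite !nth_drop.
Qed.

Definition inc_from q := [forall t : 'I_n, (q <= t) && (t.+1 < n) ==> (X x t < X x t.+1)].

Lemma inc_chain q i j : inc_from q -> q <= i -> i < j -> j < n -> X x i < X x j.
Proof.
move=> /forallP H qi ij jn; elim: j ij jn => // j IH.
rewrite ltnS leq_eqVlt => /orP [/eqP <-|lt] jn.
  have im : i < n by apply: ltn_trans jn.
  by move/implyP: (H (Ordinal im)); apply; rewrite /= qi jn.
have jm : j < n by apply: ltn_trans jn.
apply: ltn_trans (IH lt jm) _.
move/implyP: (H (Ordinal jm)); apply; rewrite /= jn andbT.
by apply: leq_trans qi (ltnW lt).
Qed.

End Pre.

Definition bad_at n (x : 'S_n) k := forall j, k + j < n -> X x (k + j) = j.

Lemma bad_pre_big n (x : 'S_n) k i : k <= n -> bad_at x k -> i < k -> n - k <= X x i.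
Proof.
move=> kn B ik; rewrite leqNgt; apply/negP => lt.
have in_ : i < n by apply: leq_trans ik kn.
have kj : k + X x i < n by rewrite -ltn_subRL.
move: (B _ kj) => /(X_inj kj in_) E; move: ik; rewrite -E.
by rewrite ltnNge leq_addr.
Qed.

Lemma charW n (x W : 'S_n) k : k <= n -> bad_at W k ->
  weak_le x W = weak_le (pre x k) (pre W k) && inc_from x k.
Proof.
move=> kn B; apply/weak_leP/andP => [H|[/weak_leP H1 H2] i j ij jn].
  split.
    apply/weak_leP => i j ij jk; rewrite !pre_X // ?(ltn_trans ij) //.
    exact: H ij (leq_trans jk kn).
  apply/forallP => -[t tlt] /=; apply/implyP => /andP [kt tn].
  rewrite X_ltN ?(ltnW tn) //; last by rewrite neq_ltn ltnSn.
  apply/negP => /(H _ _ (ltnSn t) tn).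
  have e1 : t = k + (t - k) by rewrite subnKC.
  have e2 : t.+1 = k + (t.+1 - k) by rewrite subnKC // ltnW.
  rewrite e1 B -?e1 ?(ltnW tn) // e2 B -?e2 //.
  by rewrite ltnNge leq_sub2r.
have im : i < n by apply: ltn_trans jn.
case: (ltnP j k) => jk.
  move=> lt; move: (H1 _ _ ij jk); rewrite !pre_X // ?(ltn_trans ij) //.
  by move/(_ lt).
case: (ltnP i k) => ik.
  move=> _; have e2 : j = k + (j - k) by rewrite subnKC.
  rewrite e2 B -?e2 //; apply: leq_trans (bad_pre_big kn B ik).
  by rewrite ltn_sub2r // (leq_ltn_trans jk).
move=> lt; have := inc_chain H2 ik ij jn.
by rewrite ltnNge ltnW.
Qed.

Lemma st_word_perm (s : seq nat) m : size s = m -> uniq s -> all (fun a => a < m) s ->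
  forall i, i < m -> X (st s m) i = nth 0 s i.
Proof.
move=> ss us as_.
have lt (i : 'I_m) : nth 0 s i < m.
  by apply: (allP as_); apply: mem_nth; rewrite ss.
pose f i := Ordinal (lt i).
have finj : injective f.
  move=> i j /(congr1 val) /= E; apply: val_inj; apply/eqP.
  by rewrite -(nth_uniq 0 _ _ us) ?ss ?ltn_ord //=; apply/eqP.
have -> : st s m = perm finj.
  apply: st_eq => //; apply/forallP => i; apply/forallP => j; by rewrite !permE.
by move=> i im; rewrite -[i]/(val (Ordinal im)) nth_word permE.
Qed.

Section Wc.
Variables (n k : nat) (kn : k <= n).

Definition Wseq (y : 'S_k) := map (addn (n - k)) (word y) ++ iota 0 (n - k).
Definition Wc (y : 'S_k) : 'S_n := st (Wseq y) n.

Lemma Wseq_ok (y : 'S_k) : [/\ size (Wseq y) = n, uniq (Wseq y) & all (fun a => a < n) (Wseq y)].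
Proof.
split.
- by rewrite size_cat size_map size_word size_iota subnKC.
- rewrite cat_uniq map_inj_uniq ?uniq_word ?iota_uniq //=; last exact: addnI.
  rewrite andbT; apply/hasPn => a; rewrite mem_iota /= add0n => lt; apply/mapP => [[b _ E]].
  by move: lt; rewrite E ltnNge leq_addr.
- rewrite all_cat; apply/andP; split; apply/allP => a.
    case/mapP => b /(nthP 0) [i]; rewrite size_word => ik <- ->.
    by rewrite -ltn_subRL subKn // X_lt.
  rewrite mem_iota add0n => lt; apply: leq_trans lt (leq_subr _ _).
Qed.

Lemma Wc_X (y : 'S_k) i : i < n -> X (Wc y) i = nth 0 (Wseq y) i.
Proof. by case: (Wseq_ok y) => *; apply: st_word_perm. Qed.

Lemma Wc_pre_X (y : 'S_k) i : i < k -> X (Wc y) i = n - k + X y i.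
Proof.
move=> ik; rewrite Wc_X ?(leq_trans ik) // /Wseq nth_cat size_map size_word ik.
by rewrite (nth_map 0) ?size_word.
Qed.

Lemma Wc_bad (y : 'S_k) : bad_at (Wc y) k.
Proof.
move=> j lt; rewrite Wc_X // /Wseq nth_cat size_map size_word ltnNge leq_addr /=.
by rewrite addKn nth_iota // ltn_subRL.
Qed.

Lemma pre_Wc (y : 'S_k) : pre (Wc y) k = y.
Proof.
apply: pre_eq => // i j ik jk; by rewrite !Wc_pre_X // ltn_add2l.
Qed.

End Wc.


Lemma sum_cond (T : finType) (P : pred T) (F : T -> rat) :
  (\sum_(x | P x) F x = \sum_x F x * (P x)%:R)%R.
Proof.
rewrite big_mkcond; apply: eq_bigr => x _; case: (P x); by rewrite ?mulr1 ?mulr0.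
Qed.

Lemma sum_pick (T : finType) (P : pred T) (a : T) (b : bool) :
  (\sum_(t | P t) ((a == t) && b)%:R = (P a && b)%:R :> rat)%R.
Proof.
case Pa: (P a).
  rewrite (bigD1 a) //= eqxx /= big1 ?addr0 //.
  by move=> t /andP [_ ne]; rewrite eq_sym (negbTE ne).
rewrite big1 //= => t Pt; case: eqP => // E; by move: Pt; rewrite -E Pa.
Qed.

Lemma sum_exch (T U : finType) (P : pred U) (h : T -> rat) (c : T -> U -> bool) :
  (\sum_(y | P y) \sum_x h x * (c x y)%:R = \sum_x h x * (\sum_(y | P y) (c x y)%:R))%R.
Proof.
rewrite exchange_big /=; apply: eq_bigr => x _; by rewrite mulr_sumr.
Qed.

Lemma suf_X n (x : 'S_n) p i j : i < n - p -> j < n - p ->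
  (X (suf x p) i < X (suf x p) j) = (X x (p + i) < X x (p + j)).
Proof.
move=> ip jp; rewrite -[i]/(val (Ordinal ip)) -[j]/(val (Ordinal jp)) !nth_word.
exact: suf_lt.
Qed.

Lemma des_suf n (x : 'S_n) p :
  Des (suf x p) = [seq d <- iota 1 (n - p).-1 | X x (p + d) < X x (p + d.-1)].
Proof.
rewrite /Defs.Des; apply: eq_in_filter => d; rewrite mem_iota add1n => /andP [d1 dl].
have dn : d < n - p.
  by move: dl; case: (n - p) => [|k] //=; rewrite ltnS leqn0 => /eqP d0; rewrite d0 in d1.
rewrite -/(X _ d) -/(X _ d.-1) suf_X //.
by apply: leq_ltn_trans dn; apply: leq_pred.
Qed.

Lemma des_suf_nil n (x : 'S_n) p : p < n -> (Des (suf x p) == [::]) = inc_from x p.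
Proof.
move=> pn; rewrite des_suf -[_ == [::]]negbK -has_filter.
apply/hasPn/forallP => [H [t tn] /=|H d].
  apply/implyP => /andP [pt t1].
  have : t.+1 - p \in iota 1 (n - p).-1.
    rewrite mem_iota add1n subn_gt0 ltnS pt /= prednK ?subn_gt0 //.
    by rewrite ltn_sub2r.
  move/H; rewrite subSn // /= addnS subnKC // => nlt.
  rewrite X_ltN ?(ltnW t1) ?nlt //; by rewrite neq_ltn ltnSn.
rewrite mem_iota add1n => /andP [d1 dl].
have dn : d < n - p.
  by move: dl; case: (n - p) => [|k] //=; rewrite ltnS leqn0 => /eqP d0; rewrite d0 in d1.
have tn : p + d.-1 < n.
  by rewrite -ltn_subRL; apply: leq_ltn_trans dn; apply: leq_pred.
move/implyP: (H (Ordinal tn)) => /=; rewrite leq_addr /= -addnS prednK //.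
rewrite ltn_subRL in dn; move/(_ dn) => lt; by rewrite -leqNgt ltnW.
Qed.

Definition badP n (W : 'S_n) := exists k, k < n /\ bad_at W k.

Section Kernel.
Variables (n : nat) (h : {ffun 'S_n -> rat}).

Lemma gsum_char (W : 'S_n) k : k <= n -> bad_at W k ->
  gsum h W = (\sum_x h x * (weak_le (pre x k) (pre W k) && inc_from x k)%:R)%R.
Proof.
move=> kn B; rewrite /gsum sum_cond; apply: eq_bigr => x _; by rewrite (charW x kn B).
Qed.

Lemma KA : in_left_kernel h -> forall W, badP W -> gsum h W = 0%R.
Proof.
move=> [K _] W [k [kn B]].
rewrite (gsum_char (ltnW kn) B).
have -> : (\sum_x h x * (weak_le (pre x k) (pre W k) && inc_from x k)%:R =
   \sum_(v | weak_le v (pre W k)) idDDelta h v [::])%R.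
  rewrite /idDDelta sum_exch; apply: eq_bigr => x _; congr (_ * _)%R.
  by rewrite sum_pick -/(pre x k) -/(suf x k) des_suf_nil.
by rewrite big1 // => v _; apply: K.
Qed.

End Kernel.


Section KB.
Variables (n : nat) (h : {ffun 'S_n -> rat}).
Hypothesis Hbad : forall W : 'S_n, badP W -> gsum h W = 0%R.

Lemma L2 q : q < n -> forall y : 'S_q,
  (\sum_x h x * ((pre x q == y) && inc_from x q)%:R = 0)%R.
Proof.
move=> qn; apply: weak_ind => y IH.
have E : gsum h (Wc n y) =
   (\sum_(y' | weak_le y' y) \sum_x h x * ((pre x q == y') && inc_from x q)%:R)%R.
  rewrite (gsum_char h (ltnW qn) (Wc_bad (ltnW qn) y)) (pre_Wc (ltnW qn)) sum_exch.
  by apply: eq_bigr => x _; rewrite sum_pick.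
rewrite Hbad in E; last by exists q; split => //; apply: Wc_bad; apply: ltnW.
rewrite (bigD1 y) ?weak_le_refl //= [X in (_ + X)%R]big1 ?addr0 in E; first exact: esym E.
move=> w /andP [a b]; apply: IH; by rewrite /weak_lt a b.
Qed.

Variables (p : nat) (pn : p < n) (v : 'S_p).

Definition AD (x : 'S_n) := [set t : 'I_n | (p <= t) && (t.+1 < n) && (X x t.+1 < X x t)].
Definition fD (D : {set 'I_n}) :=
  [seq d <- iota 1 (n - p).-1 | [exists t in D, val t == p + d.-1]].

Lemma Des_fD x : Des (suf x p) = fD (AD x).
Proof.
rewrite des_suf /fD; apply: eq_in_filter => d; rewrite mem_iota add1n => /andP [d1 dl].
have dn : d < n - p.
  by move: dl; case: (n - p) => [|k] //=; rewrite ltnS leqn0 => /eqP d0; rewrite d0 in d1.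
have tn : p + d.-1 < n.
  by rewrite -ltn_subRL; apply: leq_ltn_trans dn; apply: leq_pred.
apply/idP/existsP => [lt|[t /andP [tin /eqP tv]]].
  exists (Ordinal tn); rewrite /= eqxx andbT inE /= leq_addr /= -addnS prednK //.
  by rewrite lt -ltn_subRL dn.
move: tin; rewrite inE tv -addnS prednK // => /andP [_ ->] //.
Qed.

Definition EE (D : {set 'I_n}) := (\sum_x h x * ((AD x == D) && (pre x p == v))%:R)%R.
Definition CC (D : {set 'I_n}) := (\sum_x h x * ((AD x \subset D) && (pre x p == v))%:R)%R.

Lemma CC_EE D : CC D = (\sum_(D' : {set 'I_n} | D' \subset D) EE D')%R.
Proof. by rewrite /EE sum_exch; apply: eq_bigr => x _; rewrite sum_pick. Qed.

Lemma CC0 D : CC D = 0%R.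
Proof.
have n0 : 0 < n by apply: leq_ltn_trans pn.
pose A := [pred t : 'I_n | (t \in D) && (p <= t) && (t.+1 < n)].
pose M := \max_(t in A) t.+1.
pose q := maxn p M.
have pq : p <= q by apply: leq_maxl.
have Mn : M < n.
  have : M <= n.-1.
    apply/bigmax_leqP => t /andP [_ tn]; by rewrite -ltnS prednK.
  by move/leq_ltn_trans; apply; rewrite prednK.
have qn : q < n by rewrite gtn_max pn Mn.
have subD x : (AD x \subset D) = inc_from x q &&
    [forall t : 'I_n, (p <= t) && (t.+1 < q) && (X x t.+1 < X x t) ==> (t \in D)].
  apply/idP/andP => [Hs|[inc H2]].
    split.
      apply/forallP => t; apply/implyP => /andP [qt tn].
      rewrite X_ltN ?(ltnW tn) //; last by rewrite neq_ltn ltnSn.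
      apply/negP => lt.
      have tin : t \in AD x by rewrite inE (leq_trans pq qt) tn lt.
      have tD := subsetP Hs _ tin.
      have : t.+1 <= M by apply: (@leq_bigmax_cond _ A (fun t : 'I_n => t.+1)); rewrite /A /= tD (leq_trans pq qt).
      move=> /leq_trans /(_ (leq_maxr p M)) => tq.
      by move: (leq_trans tq qt); rewrite ltnn.
    apply/forallP => t; apply/implyP => /andP [/andP [pt tq] lt].
    apply: (subsetP Hs); rewrite inE pt lt (ltn_trans tq qn) //.
  apply/subsetP => t; rewrite inE => /andP [/andP [pt tn] lt].
  case: (ltnP t.+1 q) => tq.
    by move/forallP: H2 => /(_ t); rewrite pt tq lt.
  case: (ltnP t q) => tq'.
    have qE : q = t.+1 by apply/eqP; rewrite eqn_leq tq tq'.
    have ME : M = t.+1.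
      move: qE; rewrite /q /maxn; case: ltnP => // pM pE.
      by move: pt; rewrite pE ltnn.
    have cA : 0 < #|A|.
      rewrite lt0n; apply/negP => /eqP /card0_eq A0.
      move: ME; rewrite /M big_pred0 //.
    case: (eq_bigmax_cond (fun t : 'I_n => t.+1) cA) => t0 t0A.
    rewrite -/M ME => /eqP; rewrite eqSS => /eqP /val_inj E.
    by move: t0A; rewrite E /A inE => /andP [/andP [-> _] _].
  move/forallP: inc => /(_ t); rewrite tq' tn /= => lt2.
  by move: (ltn_trans lt lt2); rewrite ltnn.
pose Qy (y : 'S_q) :=
  [forall t : 'I_n, (p <= t) && (t.+1 < q) && (X y t.+1 < X y t) ==> (t \in D)] &&
  [forall i : 'I_p, forall j : 'I_p, (X v i < X v j) == (X y i < X y j)].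
have QE x : (AD x \subset D) && (pre x p == v) = Qy (pre x q) && inc_from x q.
  rewrite subD (pre_eqE x v (ltnW pn)) /Qy -andbA andbC -!andbA; congr (_ && _).
    apply: eq_forallb => t; case tq: (t.+1 < q); rewrite ?andbF ?andTb //=.
    by rewrite pre_X ?(ltnW qn) // (ltn_trans _ tq).
  congr (_ && _); apply: eq_forallb => i; apply: eq_forallb => j.
  by rewrite pre_X ?(ltnW qn) ?(leq_trans (ltn_ord _) pq).
rewrite /CC (eq_bigr (fun x => h x * (\sum_(y | Qy y) ((pre x q == y) && inc_from x q)%:R))%R).
  by rewrite -sum_exch big1 // => y _; apply: L2.
by move=> x _; rewrite QE sum_pick.
Qed.

Lemma EE0 D : EE D = 0%R.
Proof.
have : forall k (D : {set 'I_n}), #|D| < k -> EE D = 0%R; last by apply; apply: ltnSn.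
elim=> // k IH D' Dk.
move: (CC0 D'); rewrite CC_EE (bigD1 D') //= big1 ?addr0 //.
move=> D2 /andP [s ne]; apply: IH.
have : D2 \proper D' by rewrite properEneq ne s.
by move/proper_card/leq_trans; apply.
Qed.

Lemma idDD0 J : idDDelta h v J = 0%R.
Proof.
have -> : idDDelta h v J = (\sum_(D | fD D == J) EE D)%R.
  rewrite /EE sum_exch /idDDelta; apply: eq_bigr => x _; congr (_ * _)%R.
  rewrite sum_pick -/(pre x p) -/(suf x p) Des_fD andbC //.
by rewrite big1 // => D _; apply: EE0.
Qed.

End KB.


Lemma X_bad_val n (a : 'S_n) k i : bad_at a k -> k <= i -> i < n -> X a i = i - k.
Proof. by move=> B ki iN; rewrite -{1}(subnKC ki) B // subnKC. Qed.

Lemma bad_unique n (a b : 'S_n) k : k <= n -> bad_at a k -> bad_at b k ->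
  (forall i j, i < k -> j < k -> (X a i < X a j) = (X b i < X b j)) -> a = b.
Proof.
move=> kn Ba Bb H; apply: perm_rel_uniq => i j; rewrite -!nth_word.
have iN := ltn_ord i; have jN := ltn_ord j.
case: (ltnP i k) => ik; case: (ltnP j k) => jk.
- exact: H.
- rewrite (X_bad_val Ba jk) // (X_bad_val Bb jk) //.
  have l1 := bad_pre_big kn Ba ik; have l2 := bad_pre_big kn Bb ik.
  have lt : j - k < n - k by rewrite ltn_sub2r // (leq_ltn_trans jk).
  have f1 : (X a i < j - k) = false by apply/negbTE; rewrite -leqNgt (leq_trans (ltnW lt) l1).
  have f2 : (X b i < j - k) = false by apply/negbTE; rewrite -leqNgt (leq_trans (ltnW lt) l2).
  by rewrite f1 f2.
- rewrite (X_bad_val Ba ik) // (X_bad_val Bb ik) //.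
  have l1 := bad_pre_big kn Ba jk; have l2 := bad_pre_big kn Bb jk.
  have lt : i - k < n - k by rewrite ltn_sub2r // (leq_ltn_trans ik).
  by rewrite (leq_trans lt l1) (leq_trans lt l2).
- by rewrite (X_bad_val Ba ik) // (X_bad_val Bb ik) // (X_bad_val Ba jk) // (X_bad_val Bb jk).
Qed.

Section Count.
Variable n : nat.

Definition Bset (k : nat) := [set u : 'S_n | [forall j : 'I_n, (k + j < n) ==> (X u (k + j) == j)]].

Lemma BsetP k u : reflect (bad_at u k) (u \in Bset k).
Proof.
rewrite inE; apply: (iffP forallP) => [H j kj|H j].
  have jn : j < n by apply: leq_ltn_trans kj; apply: leq_addl.
  by move/implyP: (H (Ordinal jn)) => /(_ kj) /eqP.
by apply/implyP => kj; rewrite H.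
Qed.

Lemma card_Bset k : k <= n -> #|Bset k| = k`!.
Proof.
move=> kn.
have -> : Bset k = [set Wc n y | y : 'S_k].
  apply/setP => u; apply/idP/imsetP.
    move/BsetP => B; exists (pre u k); first done.
    apply: (bad_unique kn B (Wc_bad kn _)) => i j ik jk.
    by rewrite (Wc_pre_X kn _ ik) (Wc_pre_X kn _ jk) ltn_add2l pre_X.
  by case=> y _ ->; apply/BsetP; apply: Wc_bad.
rewrite card_imset ?card_Sn //.
by move=> y1 y2 E; rewrite -(pre_Wc kn y1) E pre_Wc.
Qed.

Lemma card_bad : #|[set u : 'S_n | ~~ good u]| = \sum_(k < n) k`!.
Proof.
rewrite -sum1_card big_mkcond /=.
rewrite (eq_bigr (fun u => \sum_(k < n) (u \in Bset k))) => [|u _].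
  rewrite exchange_big /=; apply: eq_bigr => k _.
  rewrite -(card_Bset (ltnW (ltn_ord k))) -sum1_card [RHS]big_mkcond /=.
  by apply: eq_bigr => u _; case: (u \in Bset k).
rewrite inE /good negbK; case: existsP => [[k0 Hk0]|nb]; last first.
  rewrite big1 // => k _; apply/eqP; rewrite eqb0; apply/negP => Bk; apply: nb; exists k.
  by move: Bk; rewrite inE.
have B0 : u \in Bset k0 by rewrite inE.
rewrite (bigD1 k0) //= B0 big1 // => k ne.
apply/eqP; rewrite eqb0; apply/negP => /BsetP Bk; move/BsetP: B0 => Bk0.
move/negP: ne; apply.
clear Hk0.
wlog lt : k k0 Bk Bk0 / k < k0.
  move=> W; case: (ltngtP k k0) => [l|l|E].
  - exact: W.
  - rewrite eq_sym; exact: W.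
  - by apply/eqP; apply: val_inj.
have kn : k0 < n := ltn_ord k0.
have e : val k0 = k + (k0 - k) by rewrite subnKC // ltnW.
have := Bk (k0 - k); rewrite -e => /(_ kn).
have := Bk0 0; rewrite addn0 => /(_ kn) ->.
by move/eqP; rewrite eq_sym subn_eq0 leqNgt lt.
Qed.

Lemma card_good : #|[set u : 'S_n | good u]| = (n`! - \sum_(k < n) k`!)%N.
Proof.
rewrite -card_bad -card_Sn -(cardsC [set u : 'S_n | good u]).
have -> : ~: [set u : 'S_n | good u] = [set u | ~~ good u].
  by apply/setP => u; rewrite !inE.
by rewrite addnK.
Qed.

End Count.


Lemma Des_small m (w : 'S_m) : m <= 1 -> Des w = [::].
Proof.
move=> m1; apply/eqP; rewrite -size_eq0 -leqn0 /Defs.Des size_filter.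
apply: leq_trans (count_size _ _) _; rewrite size_iota.
by case: m m1 {w} => [|[|]].
Qed.

Lemma st_word n (u : 'S_n) : st (word u) n = u.
Proof.
apply: st_eq; rewrite ?uniq_word ?size_word //.
by apply/forallP => i; apply/forallP => j; rewrite -/(X u i) -/(X u j) !nth_word.
Qed.

Lemma idDD_top n (h : {ffun 'S_n -> rat}) (v : 'S_n) J :
  idDDelta h v J = ((J == [::])%:R * h v)%R.
Proof.
rewrite /idDDelta (bigD1 v) //= big1 ?addr0.
  rewrite take_oversize ?size_word // st_word eqxx Des_small ?subnn //= eq_sym.
  by rewrite mulrC.
move=> u ne; rewrite take_oversize ?size_word // st_word (negbTE ne) /=.
by rewrite mulr0.
Qed.

Lemma badP_good n (W : 'S_n) : badP W <-> ~~ good W.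
Proof.
rewrite /good negbK; split.
  case=> k [kn B]; apply/existsP; exists (Ordinal kn); apply/forallP => j.
  by apply/implyP => lt; rewrite -/(X W _) B.
case/existsP => k /forallP H; exists k; split => // j kj.
have jn : j < n by apply: leq_ltn_trans kj; apply: leq_addl.
by move/implyP: (H (Ordinal jn)) => /(_ kj) /eqP.
Qed.

Lemma KBfull n (h : {ffun 'S_n -> rat}) :
  (forall W : 'S_n, badP W -> gsum h W = 0%R) -> in_left_kernel h.
Proof.
move=> Hb; split => [p v J pn|v J]; first exact: idDD0.
exact: idDD_top.
Qed.

Unset Implicit Arguments.

Theorem mainTheorem15 (n : nat) (hn : (0 < n)%N) :
  [/\ (* the M_u, u good, lie in A_n *)
      (forall u : 'S_n, good u -> in_left_kernel (Mbasis u)),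
      (* they are linearly independent *)
      (forall c : 'S_n -> rat,
         (forall v : 'S_n, (\sum_(u : 'S_n | good u) c u * Mbasis u v)%R = 0%R) ->
         forall u : 'S_n, good u -> c u = 0%R),
      (* they span A_n *)
      (forall h : {ffun 'S_n -> rat}, in_left_kernel h ->
         exists c : 'S_n -> rat,
           forall v : 'S_n, h v = (\sum_(u : 'S_n | good u) c u * Mbasis u v)%R)
    & (* hence dim A_n = n! - sum_{k<n} k! *)
      #|[set u : 'S_n | good u]| = (n`! - \sum_(k < n) k`!)%N].
Proof.
have gsumL (c : 'S_n -> rat) W :
    gsum (fun v => \sum_(u : 'S_n | good u) c u * Mbasis u v)%R W =
    (\sum_(u : 'S_n | good u) c u * (u == W)%:R)%R.
  rewrite /gsum exchange_big /=; apply: eq_bigr => u _.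
  by rewrite -mulr_sumr -[X in (_ * X)%R]/(gsum (Mbasis u) W) gsum_M.
split.
- move=> u gu; apply: KBfull => W /badP_good bW; rewrite gsum_M.
  by case: eqP => // E; move: gu; rewrite E (negbTE bW).
- move=> c H u gu; have := gsumL c u.
  rewrite /gsum big1; last by move=> x _; apply: H.
  rewrite (bigD1 u) //= eqxx mulr1 big1 ?addr0; first by move=> ->.
  by move=> w /andP [_ ne]; rewrite (negbTE ne) mulr0.
- move=> h K; exists (gsum h) => v; apply/eqP; rewrite -subr_eq0; apply/eqP.
  pose h' := (fun v => h v - \sum_(u : 'S_n | good u) gsum h u * Mbasis u v)%R.
  apply: (@gsum_inj _ h') => W.
  rewrite /gsum /h' sumrB -/(gsum h W).
  rewrite -[X in (_ - X)%R]/(gsum (fun v => \sum_(u : 'S_n | good u) gsum h u * Mbasis u v)%R W).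
  rewrite gsumL; case gW: (good W).
    rewrite (bigD1 W) //= eqxx mulr1 big1 ?addr0 ?subrr //.
    by move=> w /andP [_ ne]; rewrite (negbTE ne) mulr0.
  rewrite (KA K) ?big1 ?subrr //; last by apply/badP_good; rewrite gW.
  move=> u gu; case: eqP => [E|_]; last by rewrite mulr0.
  by move: gu; rewrite E gW.
- exact: card_good.
Qed.
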